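(* Let $R$ be a commutative ring such that for every $a\in R$, either $a$ or $1-a$ is a stable element. Then $R$ is locally stable.
   Context: All rings are commutative with identity. A ring $S$ has stable range 1 if whenever $a,b\in S$ with $aS+bS=S$ there is $y\in S$ with $a+by$ a unit. An element $a\in R$ is stable if the ring $R/aR$ has stable range 1. $R$ is locally stable if whenever $a,b\in R$ with $aR+bR=R$ there is $y\in R$ such that $a+by$ is stable. *)

(* Defs.v *)
From mathcomp Require Import all_boot all_algebra.
Set Implicit Arguments. Unset Strict Implicit. Unset Printing Implicit Defensive.
Import GRing.Theory.
Local Open Scope ring_scope.

Definition congr_mod (R : comPzRingType) (a x y : R) : Prop :=
  exists t : R, x - y = a * t.

Definition unit_mod (R : comPzRingType) (a x : R) : Prop :=
  exists w : R, congr_mod a (x * w) 1.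

(* The ring R/aR has stable range 1, written out on representatives:
   whenever (x mod a)(R/aR) + (y mod a)(R/aR) = R/aR, i.e. x*u + y*v = 1
   mod aR for some u v, there is z with x + y*z a unit of R/aR.
   (Every element of R/aR is the class of some element of R.) *)
Definition quot_stable_range1 (R : comPzRingType) (a : R) : Prop :=
  forall x y : R,
    (exists u v : R, congr_mod a (x * u + y * v) 1) ->
    exists z : R, unit_mod a (x + y * z).

Definition stable_elt (R : comPzRingType) (a : R) : Prop := quot_stable_range1 a.

Definition locally_stable (R : comPzRingType) : Prop :=
  forall a b : R, (exists u v : R, a * u + b * v = 1) ->
    exists y : R, stable_elt (a + b * y).

(* Main.v *)
Require Import Defs.
From mathcomp Require Import all_boot all_algebra.
From mathcomp Require Import ring.
Import GRing.Theory.
Local Open Scope ring_scope.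

Lemma stable_div (R : comPzRingType) (a s : R) :
  stable_elt (a * s) -> stable_elt a.
Proof.
move=> H x y [u [v [t Ht]]].
have Hx : exists u0 v0 : R, congr_mod (a * s) (x * u0 + (y * v - a * t) * v0) 1.
  exists u, 1, 0.
  have -> : x * u + (y * v - a * t) * 1 - 1 = (x * u + y * v - 1) - a * t by ring.
  rewrite Ht; ring.
have [z [w [t2 Ht2]]] := H _ _ Hx.
exists (v * z), w, (s * t2 + t * z * w).
have -> : (x + y * (v * z)) * w - 1 = ((x + (y * v - a * t) * z) * w - 1) + a * t * z * w by ring.
rewrite Ht2; ring.
Qed.

Theorem theorem2p9 (R : comPzRingType) :
  (forall a : R, stable_elt a \/ stable_elt (1 - a)) -> locally_stable R.
Proof.
move=> H a b [u [v Huv]].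
case: (H (a * (u - 1))) => Hs.
  exists 0; rewrite mulr0 addr0; exact: stable_div Hs.
exists v.
have -> : a + b * v = (a * u + b * v) - a * (u - 1) by ring.
rewrite Huv.
exact: Hs.
Qed.
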